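(* Let $q$ be a prime number, let $l>2$ be an integer, and consider $m=q^l$ inputs each of size one with reducer capacity $q$. Then there is an A2A mapping schema for these inputs using at most $q\cdot(q(q+1))^{l-1}$ reducers and having communication cost at most $q^2\cdot(q(q+1))^{l-1}$.
   Context: An A2A mapping schema for inputs with sizes $w_1,\dots,w_m$ and reducer capacity $q$ is an assignment of the inputs to a collection of reducers (each input may go to several reducers) such that every reducer receives inputs of total size at most $q$ and every pair of distinct inputs is assigned together to at least one reducer. The communication cost is the sum over reducers of the total size of the inputs assigned to it. *)

(* Defs.v *)
From mathcomp Require Import all_boot.
Set Implicit Arguments. Unset Strict Implicit. Unset Printing Implicit Defensive.

(* Inputs are indexed by 'I_m, input i has size w i.
   A mapping schema is a finite list of reducers; each reducer is the set of
   inputs assigned to it (an input may belong to several reducers). *)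

Definition load (m : nat) (w : 'I_m -> nat) (r : {set 'I_m}) : nat :=
  \sum_(i in r) w i.

Definition is_A2A_schema (m : nat) (w : 'I_m -> nat) (q : nat)
    (R : seq {set 'I_m}) : Prop :=
  (forall r, r \in R -> load w r <= q) /\
  (forall i j : 'I_m, i != j -> exists2 r, r \in R & (i \in r) && (j \in r)).

Definition comm_cost (m : nat) (w : 'I_m -> nat) (R : seq {set 'I_m}) : nat :=
  \sum_(r <- R) load w r.

(* Main.v *)
Require Import Defs.
From mathcomp Require Import all_boot zify.

Lemma pow_bound q j : 2 <= q -> q ^ (j + 3) <= (q - 1) * (q + 1) ^ (j + 2).
Proof.
move=> hq; elim: j => [|j IH].
  rewrite /= !expnS expn0; nia.
rewrite !addSn !expnS.
have h1 : q * q ^ (j + 3) <= q * ((q - 1) * (q + 1) ^ (j + 2)) by rewrite leq_mul2l IH orbT.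
apply: (leq_trans h1); set P := (q + 1) ^ (j + 2); nia.
Qed.

Lemma card_grp n g a : 0 < g -> #|[set i : 'I_n | i %/ g == a]| <= g.
Proof.
move=> hg.
have := @leq_card_in _ _ (fun i : 'I_n => Ordinal (ltn_pmod i hg)) [set i : 'I_n | i %/ g == a].
rewrite card_ord; apply=> i j; rewrite !inE => /eqP hi /eqP hj [] hm.
apply/val_inj => /=; rewrite (divn_eq i g) (divn_eq j g) hi hj hm //.
Qed.

Lemma tri k : size [seq (a, b) | a <- iota 0 k, b <- iota a.+1 (k - a.+1)] = 'C(k, 2).
Proof.
rewrite size_allpairs_dep -bin2_sum.
have -> : [seq size (iota a.+1 (k - a.+1)) | a <- iota 0 k] = [seq k - a.+1 | a <- iota 0 k].
  by apply: eq_map => a; rewrite size_iota.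
rewrite sumnE big_map.
have -> : iota 0 k = index_iota 0 k by rewrite /index_iota subn0.
rewrite big_nat_rev /=; apply: eq_big_nat => a /andP [_ ha].
rewrite add0n; lia.
Qed.

Lemma numk g x n P : 0 < g -> 0 < n -> g * x <= n - 1 -> n <= 2 * g * P -> (x + 1) * x <= 2 * (n * P).
Proof.
move=> g0 n0 h1 h2.
have e1 : (g * x + g) * (g * x) <= (n - 1 + g) * (n - 1) by apply: leq_mul; lia.
have e2 : (n - 1 + g) * (n - 1) <= (n * g) * n by apply: leq_mul; nia.
have e3 : (n * g) * n <= (n * g) * (2 * g * P) by rewrite leq_mul2l h2 orbT.
have : g * g * ((x + 1) * x) <= g * g * (2 * (n * P)).
  have -> : g * g * ((x + 1) * x) = (g * x + g) * (g * x) by rewrite -!mulnA; lia.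
  have -> : g * g * (2 * (n * P)) = (n * g) * (2 * g * P) by rewrite -!mulnA; lia.
  by apply: (leq_trans e1); apply: (leq_trans e2).
by rewrite leq_pmul2l ?muln_gt0 ?g0.
Qed.

Theorem theorem12 (q l : nat) :
  prime q -> 2 < l ->
  exists R : seq {set 'I_(q ^ l)},
    [/\ is_A2A_schema (fun _ => 1) q R,
        size R <= q * (q * (q + 1)) ^ (l - 1)
      & comm_cost (fun _ => 1) R <= q ^ 2 * (q * (q + 1)) ^ (l - 1)].
Proof.
move=> pq hl.
have q2 : 2 <= q by apply: prime_gt1.
set n := q ^ l.
set g := q./2.
have hqg : q <= 2 * g + 1 /\ 2 * g <= q.
  have := odd_double_half q; rewrite -/g -mul2n; case: (odd q) => /= <-; lia.
have g0 : 0 < g by case: hqg; lia.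
set k := (n.-1) %/ g + 1.
have hgk : g * (k - 1) <= n.-1 by rewrite /k addnK mulnC leq_divM.
have hn : n = q ^ (l - 3 + 3) by rewrite subnK.
have hP := pow_bound q (l - 3) q2.
set P := (q + 1) ^ (l - 1).
have hP' : n <= (q - 1) * P by rewrite /P (_ : l - 1 = l - 3 + 2) ?hn //; lia.
have hnq : q <= n by rewrite /n -{1}(expn1 q) leq_pexp2l //; lia.
have hk : 2 <= k.
  rewrite /k addn1 ltnS divn_gt0 //; lia.
have hkP : k * k.-1 <= (n * P).*2.
  have n0 : 0 < n by rewrite expn_gt0 (ltnW q2).
  have h2 : n <= 2 * g * P.
    apply: (leq_trans hP'); rewrite leq_mul2r; apply/orP; right; case: hqg; lia.
  have -> : k = (k - 1) + 1 by rewrite subnK //; lia.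
  rewrite addn1 /= -mul2n -addn1; apply: (@numk g) => //; by rewrite [n - 1]subn1.
pose S a b : {set 'I_n} := [set i : 'I_n | (i %/ g == a) || (i %/ g == b)].
pose R := [seq S a b | a <- iota 0 k, b <- iota a.+1 (k - a.+1)].
have hsz : size R <= n * P.
  rewrite size_allpairs_dep -(size_allpairs_dep (fun a b : nat => (a, b))) tri bin2.
  by rewrite -(doubleK (n * P)) half_leq.
have hload : forall r, r \in R -> load (fun _ => 1) r <= q.
  move=> r /allpairsPdep [a [b [_ _ ->]]].
  rewrite /load sum1_card.
  have -> : S a b = [set i : 'I_n | i %/ g == a] :|: [set i : 'I_n | i %/ g == b].
    by apply/setP => i; rewrite !inE.
  rewrite cardsU.
  have h1 := @card_grp n g a g0; have h2 := @card_grp n g b g0; case: hqg => _ h3; apply: leq_trans (leq_subr _ _) _; apply: leq_trans (leq_add h1 h2) _; lia.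
have hnP : q * (q * (q + 1)) ^ (l - 1) = n * P.
  by rewrite expnMn mulnA -expnS /P subn1 prednK //; lia.
exists R; split.
- split=> // i j hij.
  have n0 : 0 < n by rewrite expn_gt0 (ltnW q2).
  clear hP hP' hn hkP hsz hnP hload hgk.
  have hi : i %/ g < k by rewrite /k addn1 ltnS leq_div2r // -ltnS prednK ?ltn_ord.
  have hj : j %/ g < k by rewrite /k addn1 ltnS leq_div2r // -ltnS prednK ?ltn_ord.
  have mem : forall a b, a < b < k -> S a b \in R.
    move=> a b /andP [hab hbk]; apply: (@allpairs_f_dep _ _ _ S); rewrite mem_iota; lia.
  have [lt|gt|eq] := ltngtP (i %/ g) (j %/ g).
  + exists (S (i %/ g) (j %/ g)); first by apply: mem; lia.
    by rewrite !inE !eqxx orbT.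
  + exists (S (j %/ g) (i %/ g)); first by apply: mem; lia.
    by rewrite !inE !eqxx orbT.
  + case: (ltnP (i %/ g).+1 k) => hlt.
    * exists (S (i %/ g) (i %/ g).+1); first by apply: mem; lia.
      by rewrite !inE eqxx -eq eqxx.
    * exists (S (i %/ g).-1 (i %/ g)); first by apply: mem; lia.
      by rewrite !inE eqxx -eq eqxx !orbT.
- by rewrite hnP.
- rewrite /comm_cost.
  apply: (@leq_trans (\sum_(r <- R) q)).
    by rewrite big_seq_cond [X in _ <= X]big_seq_cond; apply: leq_sum => r /andP [hr _]; apply: hload.
  rewrite big_const_seq count_predT iter_addn_0 mulnC.
  by rewrite expnS -mulnA hnP mulnC leq_mul2l hsz orbT.
Qed.
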